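(* Let $0<p<1$, let $u_1,\dots,u_4,v_1,\dots,v_4$ be real numbers with $u_r>0$ and $|v_r|<u_r+\tfrac12$ for $r=1,2$, let $\textsc{m}\in\mathbb{N}$, and put $\alpha=\pi/(u_1+u_2+\textsc{m})$. Then for every $k\in\{1,\dots,\textsc{m}\}$ the numbers $$a_k=\prod_{r=1}^4\frac{[u_1-u_r+k]_r\,[u_1-v_r-\frac12+k]_r}{[u_1+k]_r\,[u_1-\frac12+k]_r},\qquad \tilde a_k=\prod_{r=1}^4\frac{[u_2-u_{\pi_2(r)}+k]_r\,[u_2-v_{\pi_2(r)}-\frac12+k]_r}{[u_2+k]_r\,[u_2-\frac12+k]_r}$$ are (well defined and) strictly positive.
   Context: Jacobi theta functions with nome $0<p<1$: $\theta_1(z)=2p^{1/4}\sin z\prod_{n\ge1}(1-p^{2n})(1-2p^{2n}\cos 2z+p^{4n})$, $\theta_2(z)=2p^{1/4}\cos z\prod_{n\ge1}(1-p^{2n})(1+2p^{2n}\cos 2z+p^{4n})$, $\theta_3(z)=\prod_{n\ge1}(1-p^{2n})(1+2p^{2n-1}\cos 2z+p^{4n-2})$, $\theta_4(z)=\prod_{n\ge1}(1-p^{2n})(1-2p^{2n-1}\cos 2z+p^{4n-2})$. Rescaled theta functions: $[z]_1=\theta_1(\frac{\alpha}{2}z)/(\frac{\alpha}{2}\theta_1'(0))$ and $[z]_r=\theta_r(\frac{\alpha}{2}z)/\theta_r(0)$ for $r=2,3,4$. The permutation $\pi_2\in S_4$ is $\pi_2=(12)(34)$. *)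

(* Defs.v *)
From Stdlib Require Import Reals.
From Coquelicot Require Import Coquelicot.
Open Scope R_scope.

Fixpoint prod1 (f : nat -> R) (N : nat) : R :=
  match N with
  | O => 1
  | S N' => prod1 f N' * f (S N')
  end.

Definition infprod (f : nat -> R) : R := real (Lim_seq (fun N => prod1 f N)).

Definition theta1 (p z : R) : R :=
  2 * Rpower p (1/4) * sin z *
  infprod (fun n => (1 - p ^ (2*n)) * (1 - 2 * p ^ (2*n) * cos (2*z) + p ^ (4*n))).
Definition theta2 (p z : R) : R :=
  2 * Rpower p (1/4) * cos z *
  infprod (fun n => (1 - p ^ (2*n)) * (1 + 2 * p ^ (2*n) * cos (2*z) + p ^ (4*n))).
Definition theta3 (p z : R) : R :=
  infprod (fun n => (1 - p ^ (2*n)) * (1 + 2 * p ^ (2*n-1) * cos (2*z) + p ^ (4*n-2))).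
Definition theta4 (p z : R) : R :=
  infprod (fun n => (1 - p ^ (2*n)) * (1 - 2 * p ^ (2*n-1) * cos (2*z) + p ^ (4*n-2))).

Definition theta (r : nat) (p z : R) : R :=
  match r with
  | 1%nat => theta1 p z
  | 2%nat => theta2 p z
  | 3%nat => theta3 p z
  | _ => theta4 p z
  end.

Definition bracket_den (p alpha : R) (r : nat) : R :=
  match r with
  | 1%nat => alpha / 2 * Derive (theta1 p) 0
  | _ => theta r p 0
  end.

Definition bracket (p alpha : R) (r : nat) (z : R) : R :=
  theta r p (alpha / 2 * z) / bracket_den p alpha r.

Definition prod4 (f : nat -> R) : R := f 1%nat * f 2%nat * f 3%nat * f 4%nat.

Definition pi2 (r : nat) : nat :=
  match r with
  | 1%nat => 2%nat
  | 2%nat => 1%nat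
  | 3%nat => 4%nat
  | 4%nat => 3%nat
  | _ => r
  end.

(* Main.v *)
Require Import Defs.
From Stdlib Require Import Reals Lra Lia.
From Coquelicot Require Import Coquelicot.
Open Scope R_scope.
Lemma sinb h : 0 < h <= 1 -> h/2 <= sin h <= h.
intros H. assert (PI > 2) by (pose proof PI2_1; lra).
assert (S1 : sin_lb h <= sin h) by (apply SIN; lra).
pose proof (sin_lt_x h (proj1 H)).
unfold sin_lb, sin_approx in S1. simpl in S1. unfold sin_term in S1.
change (2*0+1)%nat with 1%nat in S1.
change (2*1+1)%nat with 3%nat in S1.
change (2*2+1)%nat with 5%nat in S1.
change (2*3+1)%nat with 7%nat in S1.
change (Factorial.fact 1) with 1%nat in S1.
change (Factorial.fact 3) with 6%nat in S1.
change (Factorial.fact 5) with 120%nat in S1.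
rewrite (INR_IZR_INZ 6), (INR_IZR_INZ 120), (INR_IZR_INZ (Factorial.fact 7)) in S1.
change (Z.of_nat (Factorial.fact 7)) with 5040%Z in S1.
change (Z.of_nat 6) with 6%Z in S1.
change (Z.of_nat 120) with 120%Z in S1.
simpl pow in S1. simpl INR in S1.
assert (0 < h*h) by nra. assert (h*h <= 1) by nra. 
assert (0 < h*h*h) by nra.
match type of S1 with ?a <= _ => assert (E : a = h - h^3/6 + h^5/120 - h^7/5040) by field end.
rewrite E in S1.
assert (h^3 <= h) by (simpl; nra). assert (h^7 <= h). { replace (h^7) with (h^3*(h*h*h*h)) by ring. assert (h*h*h*h <= 1) by nra. nra. }
assert (0 <= h^5) by (apply pow_le; lra). split; lra.
Qed.
Lemma ln_le_m1 t : 0 < t -> ln t <= t - 1.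
Proof. intros. pose proof (exp_ineq1_le (ln t)). rewrite exp_ln in H0; lra. Qed.

Lemma lnA p w t : 0 <= w <= p -> p < 1 -> (1-w)^3 <= t <= (1+w)^2 ->
  0 < t /\ Rabs (ln t) <= 3/(1-p)^3 * w.
Proof.
  intros Hw Hp Ht.
  assert (h1 : 0 < 1 - p) by lra.
  assert (h3 : 0 < (1-p)^3) by (apply pow_lt; lra).
  assert (h3' : (1-p)^3 <= 1) by (simpl; nra).
  assert (hw3 : (1-p)^3 <= (1-w)^3) by (apply pow_incr; lra).
  assert (tp : 0 < t) by lra. split; [exact tp|].
  assert (up : ln t <= 3 * w).
  { pose proof (ln_le_m1 t tp). simpl in Ht. nra. }
  assert (lo : - ln t <= 3/(1-p)^3 * w).
  { rewrite <- ln_Rinv by lra. pose proof (ln_le_m1 (/t)) as L.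
    assert (0 < /t) by (apply Rinv_0_lt_compat; lra).
    specialize (L H).
    assert (/t - 1 <= 3/(1-p)^3 * w); [|lra].
    assert (1 - t <= 3 * w) by (simpl in Ht; nra).
    apply Rmult_le_reg_r with (t * (1-p)^3). nra.
    replace ((/t - 1) * (t * (1-p)^3)) with ((1 - t) * (1-p)^3) by (field; lra).
    replace (3 / (1 - p) ^ 3 * w * (t * (1 - p) ^ 3)) with (3 * w * t) by (field; lra).
    nra. }
  assert (0 <= 3/(1-p)^3 * w) by (apply Rmult_le_pos; [apply Rlt_le, Rdiv_lt_0_compat; lra| lra]).
  assert (3 * w <= 3/(1-p)^3 * w).
  { apply Rmult_le_compat_r; [lra|]. unfold Rdiv. 
    assert (1 <= /(1-p)^3). { rewrite <- Rinv_1. apply Rinv_le_contravar; lra. } lra. }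
  apply Rabs_le; lra.
Qed.
Open Scope R_scope.
Lemma exp_mono x y : x <= y -> exp x <= exp y.
Proof. intros H. destruct (Rle_lt_or_eq_dec _ _ H). apply Rlt_le, exp_increasing; auto. subst; lra. Qed.

Lemma infprod_bounds (f : nat -> R) p C : 0 < p < 1 -> 0 <= C ->
  (forall n, (1 <= n)%nat -> 0 < f n /\ Rabs (ln (f n)) <= C * p^n) ->
  exp (-(C/(1-p))) <= infprod f <= exp (C/(1-p)).
Proof.
  intros Hp HC Hf.
  assert (Part : forall N, exists s, prod1 f N = exp s /\ Rabs s * (1-p) <= C*(p - p^(S N))).
  { induction N as [|N [s [Hs Hb]]].
    - exists 0. rewrite exp_0. split; [reflexivity|]. rewrite Rabs_R0. simpl. nra.
    - destruct (Hf (S N)) as [fp fb]; [lia|].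
      exists (s + ln (f (S N))). split.
      + simpl. rewrite Hs, exp_plus, exp_ln; auto.
      + pose proof (Rabs_triang s (ln (f (S N)))).
        assert (0 <= p ^ S N) by (apply pow_le; lra).
        replace (p ^ S (S N)) with (p * p ^ S N) by reflexivity. nra. }
  assert (B : forall N, exp (-(C/(1-p))) <= prod1 f N <= exp (C/(1-p))).
  { intro N. destruct (Part N) as [s [Hs Hb]]. rewrite Hs.
    assert (0 <= p ^ S N) by (apply pow_le; lra).
    assert (Rabs s <= C/(1-p)).
    { apply Rmult_le_reg_r with (1-p); [lra|]. unfold Rdiv. rewrite Rmult_assoc, Rinv_l by lra. nra. }
    apply Rabs_le_between in H0.
    split; apply exp_mono; lra. }
  unfold infprod.
  assert (L1 : Rbar_le (Lim_seq (fun _ => exp (-(C/(1-p))))) (Lim_seq (fun N => prod1 f N))).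
  { apply Lim_seq_le_loc. exists 0%nat. intros. apply B. }
  assert (L2 : Rbar_le (Lim_seq (fun N => prod1 f N)) (Lim_seq (fun _ => exp (C/(1-p))))).
  { apply Lim_seq_le_loc. exists 0%nat. intros. apply B. }
  rewrite Lim_seq_const in L1, L2.
  destruct (Lim_seq (fun N => prod1 f N)); simpl in *; try contradiction; lra.
Qed.

Lemma pow_mono p n m : 0 <= p <= 1 -> (n <= m)%nat -> p ^ m <= p ^ n.
Proof.
  intros Hp Hnm. replace m with (n + (m - n))%nat by lia. rewrite pow_add.
  assert (p ^ (m - n) <= 1). { rewrite <- (pow1 (m-n)). apply pow_incr; lra. }
  assert (0 <= p ^ n) by (apply pow_le; lra). nra.
Qed.

Lemma factor_bound p n m1 m2 c : 0 < p < 1 -> (1 <= n)%nat -> (n <= m1)%nat -> (n <= m2)%nat ->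
  -1 <= c <= 1 ->
  0 < (1 - p^m1) * (1 + 2*p^m2*c + p^m2*p^m2) /\
  Rabs (ln ((1 - p^m1) * (1 + 2*p^m2*c + p^m2*p^m2))) <= 3/(1-p)^3 * p^n.
Proof.
  intros Hp Hn H1 H2 Hc.
  assert (wp : p^n <= p) by (rewrite <- (pow_1 p) at 2; apply pow_mono; [lra|lia]).
  assert (w0 : 0 <= p^n) by (apply pow_le; lra).
  assert (y1 : p^m1 <= p^n) by (apply pow_mono; [lra|lia]).
  assert (x1 : p^m2 <= p^n) by (apply pow_mono; [lra|lia]).
  assert (y0 : 0 <= p^m1) by (apply pow_le; lra).
  assert (x0 : 0 <= p^m2) by (apply pow_le; lra).
  apply lnA with (p := p) (w := p^n); [lra|lra|].
  set (w := p^n) in *. set (x := p^m2) in *. set (y := p^m1) in *.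
  assert (g1 : (1-x)*(1-x) <= 1 + 2*x*c + x*x) by nra.
  assert (g2 : 1 + 2*x*c + x*x <= (1+x)*(1+x)) by nra.
  assert (g3 : (1-w)*(1-w) <= (1-x)*(1-x)) by nra.
  assert (g4 : (1+x)*(1+x) <= (1+w)*(1+w)) by nra.
  simpl. split.
  - assert (0 <= 1 - w) by lra. assert (0 <= (1-w)*(1-w)) by nra. nra.
  - assert (0 <= 1 + 2*x*c + x*x) by nra. nra.
Qed.

Lemma infprod_ext f g : (forall n, (1 <= n)%nat -> f n = g n) -> infprod f = infprod g.
Proof.
  intros H. unfold infprod. f_equal. apply Lim_seq_ext. intro N.
  induction N; simpl; auto. rewrite IHN, H; auto; lia.
Qed.

Lemma infprod_theta p (m1 m2 : nat -> nat) c : 0 < p < 1 ->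
  (forall n, (1 <= n)%nat -> (n <= m1 n)%nat /\ (n <= m2 n)%nat) -> -1 <= c <= 1 ->
  exp (-((3/(1-p)^3)/(1-p))) <= infprod (fun n => (1 - p^(m1 n)) * (1 + 2*p^(m2 n)*c + p^(m2 n)*p^(m2 n)))
  <= exp ((3/(1-p)^3)/(1-p)).
Proof.
  intros Hp Hm Hc. apply infprod_bounds; auto.
  - apply Rlt_le, Rdiv_lt_0_compat; [lra| apply pow_lt; lra].
  - intros n Hn. destruct (Hm n Hn). apply factor_bound; auto.
Qed.

Definition Bd p := (3/(1-p)^3)/(1-p).

Lemma th1 p z : 0 < p < 1 -> exists Q, exp (- Bd p) <= Q <= exp (Bd p) /\
  theta1 p z = 2 * Rpower p (1/4) * sin z * Q.
Proof.
  intros Hp. eexists. split; [|unfold theta1; reflexivity].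
  rewrite (infprod_ext _ (fun n => (1 - p^(2*n)) * (1 + 2*p^(2*n)*(- cos (2*z)) + p^(2*n)*p^(2*n)))).
  - apply infprod_theta; auto. intros; lia. pose proof (COS_bound (2*z)); lra.
  - intros n Hn. rewrite <- pow_add. replace (2*n+2*n)%nat with (4*n)%nat by lia. ring.
Qed.

Lemma th2 p z : 0 < p < 1 -> exists Q, exp (- Bd p) <= Q <= exp (Bd p) /\
  theta2 p z = 2 * Rpower p (1/4) * cos z * Q.
Proof.
  intros Hp. eexists. split; [|unfold theta2; reflexivity].
  rewrite (infprod_ext _ (fun n => (1 - p^(2*n)) * (1 + 2*p^(2*n)*(cos (2*z)) + p^(2*n)*p^(2*n)))).
  - apply infprod_theta; auto. intros; lia. pose proof (COS_bound (2*z)); lra.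
  - intros n Hn. rewrite <- pow_add. replace (2*n+2*n)%nat with (4*n)%nat by lia. ring.
Qed.

Lemma th3 p z : 0 < p < 1 -> exp (- Bd p) <= theta3 p z <= exp (Bd p).
Proof.
  intros Hp. unfold theta3.
  rewrite (infprod_ext _ (fun n => (1 - p^(2*n)) * (1 + 2*p^(2*n-1)*(cos (2*z)) + p^(2*n-1)*p^(2*n-1)))).
  - apply infprod_theta; auto. intros; lia. pose proof (COS_bound (2*z)); lra.
  - intros n Hn. rewrite <- pow_add. replace (2*n-1+(2*n-1))%nat with (4*n-2)%nat by lia. ring.
Qed.

Lemma th4 p z : 0 < p < 1 -> exp (- Bd p) <= theta4 p z <= exp (Bd p).
Proof.
  intros Hp. unfold theta4.
  rewrite (infprod_ext _ (fun n => (1 - p^(2*n)) * (1 + 2*p^(2*n-1)*(- cos (2*z)) + p^(2*n-1)*p^(2*n-1)))).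
  - apply infprod_theta; auto. intros; lia. pose proof (COS_bound (2*z)); lra.
  - intros n Hn. rewrite <- pow_add. replace (2*n-1+(2*n-1))%nat with (4*n-2)%nat by lia. ring.
Qed.

Lemma real_lim_pos (u : nat -> R) a b : 0 < a -> (forall n, a <= u n <= b) -> 0 < real (Lim_seq u).
Proof.
  intros Ha B.
  assert (L1 : Rbar_le (Lim_seq (fun _ => a)) (Lim_seq u)).
  { apply Lim_seq_le_loc. exists 0%nat. intros. apply B. }
  assert (L2 : Rbar_le (Lim_seq u) (Lim_seq (fun _ => b))).
  { apply Lim_seq_le_loc. exists 0%nat. intros. apply B. }
  rewrite Lim_seq_const in L1, L2.
  destruct (Lim_seq u); simpl in *; try contradiction; lra.
Qed.

Lemma deriv_pos p : 0 < p < 1 -> 0 < Derive (theta1 p) 0.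
Proof.
  intros Hp. unfold Derive, Lim.
  assert (R4 : 0 < Rpower p (1/4)) by (unfold Rpower; apply exp_pos).
  assert (E1 : 0 < exp (- Bd p)) by apply exp_pos.
  apply real_lim_pos with (a := Rpower p (1/4) * exp (- Bd p)) (b := 2 * Rpower p (1/4) * exp (Bd p)).
  { apply Rmult_lt_0_compat; auto. }
  intro n. simpl Rbar_loc_seq.
  destruct (th1 p 0 Hp) as [Q0 [_ HQ0]]. rewrite HQ0, sin_0.
  assert (hpos : 0 < / (INR n + 1)) by (apply Rinv_0_lt_compat; pose proof (pos_INR n); lra).
  assert (hle : / (INR n + 1) <= 1).
  { rewrite <- Rinv_1. apply Rinv_le_contravar; [lra|]. pose proof (pos_INR n); lra. }
  rewrite !Rplus_0_l. set (h := / (INR n + 1)) in *.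
  destruct (th1 p h Hp) as [Q [HQb HQ]]. rewrite HQ.
  destruct (sinb h) as [s1 s2]; [lra|].
  replace ((2 * Rpower p (1 / 4) * sin h * Q - 2 * Rpower p (1 / 4) * 0 * Q0) / h)
    with (2 * Rpower p (1/4) * Q * (sin h / h)) by (field; lra).
  assert (q1 : 1/2 <= sin h / h).
  { apply Rmult_le_reg_r with h; [lra|]. replace (sin h / h * h) with (sin h) by (field; lra). lra. }
  assert (q2 : sin h / h <= 1).
  { apply Rmult_le_reg_r with h; [lra|]. replace (sin h / h * h) with (sin h) by (field; lra). lra. }
  assert (0 < Q) by lra.
  split.
  - assert (Rpower p (1/4) * exp (- Bd p) <= Rpower p (1/4) * Q) by (apply Rmult_le_compat_l; lra).
    assert (Rpower p (1/4) * Q * 1 <= Rpower p (1/4) * Q * (2 * (sin h / h))) by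
      (apply Rmult_le_compat_l; nra).
    nra.
  - assert (Rpower p (1/4) * Q <= Rpower p (1/4) * exp (Bd p)) by (apply Rmult_le_compat_l; lra).
    assert (Rpower p (1/4) * Q * (sin h / h) <= Rpower p (1/4) * Q * 1) by
      (apply Rmult_le_compat_l; nra).
    nra.
Qed.

Lemma den_pos p alpha r : 0 < p < 1 -> 0 < alpha -> (1 <= r <= 4)%nat -> 0 < bracket_den p alpha r.
Proof.
  intros Hp Ha Hr.
  assert (R4 : 0 < Rpower p (1/4)) by (unfold Rpower; apply exp_pos).
  assert (E1 : 0 < exp (- Bd p)) by apply exp_pos.
  destruct r as [|[|[|[|[|r]]]]]; try lia; unfold bracket_den, theta.
  - pose proof (deriv_pos p Hp). apply Rmult_lt_0_compat; lra.
  - destruct (th2 p 0 Hp) as [Q [HQ E]]. rewrite E, cos_0.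
    apply Rmult_lt_0_compat; lra.
  - destruct (th3 p 0 Hp). lra.
  - destruct (th4 p 0 Hp). lra.
Qed.

Lemma div_bounds a b z S : 0 < S -> a*S < z < b*S -> a < z/S < b.
Proof.
  intros HS H. split.
  - apply Rmult_lt_reg_r with S; auto. replace (z/S*S) with z by (field; lra). lra.
  - apply Rmult_lt_reg_r with S; auto. replace (z/S*S) with z by (field; lra). lra.
Qed.

Lemma br_pos p S r z : 0 < p < 1 -> 0 < S -> (1 <= r <= 4)%nat ->
  (r = 1%nat -> 0 < z < 2*S) -> (r = 2%nat -> -S < z < S) ->
  0 < bracket p (PI/S) r z.
Proof.
  intros Hp HS Hr H1 H2.
  assert (Ha : 0 < PI/S) by (apply Rdiv_lt_0_compat; auto; apply PI_RGT_0).
  pose proof (den_pos p (PI/S) r Hp Ha Hr) as D.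
  unfold bracket. apply Rdiv_lt_0_compat; auto.
  assert (R4 : 0 < Rpower p (1/4)) by (unfold Rpower; apply exp_pos).
  assert (E1 : 0 < exp (- Bd p)) by apply exp_pos.
  pose proof PI_RGT_0.
  replace (PI / S / 2 * z) with (PI * (z / (2*S))) by (field; lra).
  destruct r as [|[|[|[|[|r]]]]]; try lia; unfold theta.
  - destruct (th1 p (PI * (z / (2*S))) Hp) as [Q [HQ E]]. rewrite E.
    destruct (div_bounds 0 1 z (2*S)) as [d1 d2]; [lra| specialize (H1 eq_refl); lra|].
    assert (0 < sin (PI * (z / (2 * S)))) by (apply sin_gt_0; nra).
    repeat apply Rmult_lt_0_compat; lra.
  - destruct (th2 p (PI * (z / (2*S))) Hp) as [Q [HQ E]]. rewrite E.
    destruct (div_bounds (-1/2) (1/2) z (2*S)) as [d1 d2]; [lra| specialize (H2 eq_refl); lra|].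
    assert (0 < cos (PI * (z / (2 * S)))) by (apply cos_gt_0; nra).
    repeat apply Rmult_lt_0_compat; lra.
  - destruct (th3 p (PI * (z / (2*S))) Hp). lra.
  - destruct (th4 p (PI * (z / (2*S))) Hp). lra.
Qed.

Lemma mul4 A B C D : 0 < A -> 0 < B -> 0 < C -> 0 < D -> 0 < A * B * C * D.
Proof. intros. repeat apply Rmult_lt_0_compat; auto. Qed.

Lemma pos4 A B C D : 0 < A -> 0 < B -> 0 < C -> 0 < D -> 0 < A * B / (C * D).
Proof. intros. apply Rdiv_lt_0_compat; apply Rmult_lt_0_compat; auto. Qed.

Theorem mainTheorem1 (p : R) (u v : nat -> R) (M : nat) :
  0 < p < 1 ->
  0 < u 1%nat -> 0 < u 2%nat ->
  Rabs (v 1%nat) < u 1%nat + 1/2 -> Rabs (v 2%nat) < u 2%nat + 1/2 ->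
  let alpha := PI / (u 1%nat + u 2%nat + INR M) in
  forall k : nat, (1 <= k <= M)%nat ->
  let K := INR k in
  (* well-definedness: all normalisations and denominators are nonzero *)
  (forall r : nat, (1 <= r <= 4)%nat ->
     bracket_den p alpha r <> 0 /\
     bracket p alpha r (u 1%nat + K) <> 0 /\
     bracket p alpha r (u 1%nat - 1/2 + K) <> 0 /\
     bracket p alpha r (u 2%nat + K) <> 0 /\
     bracket p alpha r (u 2%nat - 1/2 + K) <> 0) /\
  (* a_k > 0 *)
  0 < prod4 (fun r =>
        bracket p alpha r (u 1%nat - u r + K) *
        bracket p alpha r (u 1%nat - v r - 1/2 + K) /
        (bracket p alpha r (u 1%nat + K) *
         bracket p alpha r (u 1%nat - 1/2 + K))) /\
  (* tilde a_k > 0 *)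
  0 < prod4 (fun r =>
        bracket p alpha r (u 2%nat - u (pi2 r) + K) *
        bracket p alpha r (u 2%nat - v (pi2 r) - 1/2 + K) /
        (bracket p alpha r (u 2%nat + K) *
         bracket p alpha r (u 2%nat - 1/2 + K))).
Proof.
  intros Hp Hu1 Hu2 Hv1 Hv2 alpha k Hk K.
  apply Rabs_def2 in Hv1. apply Rabs_def2 in Hv2.
  assert (K1 : 1 <= K) by (unfold K; replace 1 with (INR 1) by reflexivity; apply le_INR; lia).
  assert (KM : K <= INR M) by (unfold K; apply le_INR; lia).
  set (S := u 1%nat + u 2%nat + INR M) in *.
  assert (HSd : S = u 1%nat + u 2%nat + INR M) by reflexivity.
  assert (HS : 0 < S) by lra.
  assert (Ha : 0 < alpha) by (apply Rdiv_lt_0_compat; auto; apply PI_RGT_0).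
  assert (BR : forall r z, (1 <= r <= 4)%nat -> (r = 1%nat -> 0 < z < 2*S) -> (r = 2%nat -> -S < z < S) ->
     0 < bracket p alpha r z) by (intros; apply br_pos; auto).
  split; [|split].
  - intros r Hr. repeat split; apply Rgt_not_eq; unfold Rgt.
    + apply den_pos; auto.
    + apply BR; auto; intros; split; lra.
    + apply BR; auto; intros; split; lra.
    + apply BR; auto; intros; split; lra.
    + apply BR; auto; intros; split; lra.
  - unfold prod4. apply mul4; apply pos4; apply BR;
      try lia; intros; try discriminate; split; lra.
  - unfold prod4, pi2. apply mul4; apply pos4; apply BR;
      try lia; intros; try discriminate; split; lra.
Qed.
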